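(* Let $(G_1,s_1,t_1)$ and $(G_2,s_2,t_2)$ be TTSPGs, $L_1=(G_1,l_1)$, $L_2=(G_2,l_2)$ linkages, $(G,s_2,t_1)=(G_1,s_1,t_1)\circ(G_2,s_2,t_2)$, and $L=(G,l)$ with $l$ restricting to $l_1$ on edges from $G_1$ and to $l_2$ on edges from $G_2$. Suppose $M(L)\neq\emptyset$. Then $M(L)$ is connected if and only if both $M(L_1)$ and $M(L_2)$ are connected.
   Context: A graph has a finite vertex set and a finite multiset of edges that are unordered pairs of distinct vertices. A linkage is $L=(G,l)$ with $l:E\to\mathbb R_{\ge0}$; $C(L)=\{p:V\to\mathbb R^2:|p(u)-p(v)|=l(\{u,v\})\ \forall\{u,v\}\in E\}\subseteq\mathbb R^{2|V|}$, and $M(L)$ is the quotient of $C(L)$ by the group of orientation preserving isometries of $\mathbb R^2$ (quotient topology). TTG: $(G,s,t)$ with $s\ne t$; series composition $(G_1,s_1,t_1)\circ(G_2,s_2,t_2)=(G_1\cup_{t_2\sim s_1}G_2,s_2,t_1)$ (disjoint union with $t_2$ identified to $s_1$); parallel composition $(G_1,s_1,t_1)\|(G_2,s_2,t_2)=(G_1\cup_{s_1\sim s_2,t_1\sim t_2}G_2,s_1,t_1)$. TTSPGs: the smallest class of TTGs containing a single edge $(K_2,s,t)$ and closed under both compositions. *)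

(* Defs.v *)
From Stdlib Require Import Reals List Arith.
Import ListNotations.
Open Scope R_scope.

(* A graph has vertex set {0,...,nv-1} and a finite multiset (list) of edges,
   each an (unordered) pair of vertices. *)
Record graph := mkGraph { nv : nat ; edges : list (nat * nat) }.

(* Series composition (G1,s1,t1) o (G2,s2,t2): disjoint union with t2 identified
   to s1. *)
Definition ser_map (n1 s1 t2 v : nat) : nat :=
  if Nat.eqb v t2 then s1
  else if Nat.ltb v t2 then (n1 + v)%nat else (n1 + v - 1)%nat.

Definition ser (G1 : graph) (s1 : nat) (G2 : graph) (t2 : nat) : graph :=
  mkGraph (nv G1 + nv G2 - 1)
    (edges G1 ++ map (fun e => (ser_map (nv G1) s1 t2 (fst e),
                                ser_map (nv G1) s1 t2 (snd e))) (edges G2)).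

Definition par_map (n1 s1 t1 s2 t2 v : nat) : nat :=
  if Nat.eqb v s2 then s1
  else if Nat.eqb v t2 then t1
  else (n1 + v - (if Nat.ltb s2 v then 1 else 0) - (if Nat.ltb t2 v then 1 else 0))%nat.

Definition par (G1 : graph) (s1 t1 : nat) (G2 : graph) (s2 t2 : nat) : graph :=
  mkGraph (nv G1 + nv G2 - 2)
    (edges G1 ++ map (fun e => (par_map (nv G1) s1 t1 s2 t2 (fst e),
                                par_map (nv G1) s1 t1 s2 t2 (snd e))) (edges G2)).

Inductive ttspg : graph -> nat -> nat -> Prop :=
| ttspg_edge : ttspg (mkGraph 2 [(0%nat, 1%nat)]) 0%nat 1%nat
| ttspg_ser : forall G1 s1 t1 G2 s2 t2,
    ttspg G1 s1 t1 -> ttspg G2 s2 t2 ->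
    ttspg (ser G1 s1 G2 t2) (ser_map (nv G1) s1 t2 s2) t1
| ttspg_par : forall G1 s1 t1 G2 s2 t2,
    ttspg G1 s1 t1 -> ttspg G2 s2 t2 ->
    ttspg (par G1 s1 t1 G2 s2 t2) s1 t1.

Definition dist2 (a b : R * R) : R :=
  sqrt ((fst a - fst b) ^ 2 + (snd a - snd b) ^ 2).

(* A linkage is a graph G together with a list l of edge lengths (l[i] is the
   length of edges G [i]).  p : nat -> R*R is a configuration (only values on
   vertices < nv G matter) iff every edge has the prescribed length. *)
Definition config (G : graph) (l : list R) (p : nat -> R * R) : Prop :=
  Forall2 (fun e r => dist2 (p (fst e)) (p (snd e)) = r) (edges G) l.

(* Orientation preserving isometries of R^2: x |-> Rot x + b. *)
Definition rigid (f : R * R -> R * R) : Prop :=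
  exists c s a b, c ^ 2 + s ^ 2 = 1 /\
    forall x y, f (x, y) = (c * x - s * y + a, s * x + c * y + b).

(* p and q represent the same point of M(L) (n = number of vertices). *)
Definition equiv (n : nat) (p q : nat -> R * R) : Prop :=
  exists f, rigid f /\ forall v, (v < n)%nat -> q v = f (p v).

(* Topology on R^{2n} restricted to C : max over vertices of Euclidean dist. *)
Definition close (n : nat) (p q : nat -> R * R) (eps : R) : Prop :=
  forall v, (v < n)%nat -> dist2 (p v) (q v) < eps.

Definition rel_open (n : nat) (C A : (nat -> R * R) -> Prop) : Prop :=
  forall p, C p -> A p ->
    exists eps, 0 < eps /\ forall q, C q -> close n p q eps -> A q.

Definition saturated (n : nat) (C A : (nat -> R * R) -> Prop) : Prop :=
  forall p q, C p -> C q -> equiv n p q -> A p -> A q.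

(* Connectedness of the quotient C / equiv with the quotient topology:
   open subsets of M correspond to saturated relatively open subsets of C, so
   M is connected iff every saturated subset of C that is relatively clopen in
   C is empty or all of C. *)
Definition M_connected (n : nat) (C : (nat -> R * R) -> Prop) : Prop :=
  forall A, saturated n C A -> rel_open n C A -> rel_open n C (fun p => ~ A p) ->
    (forall p, C p -> A p) \/ (forall p, C p -> ~ A p).

(* Main.v *)
Require Import Defs.
From Stdlib Require Import Reals Lra Lia Psatz List Arith Classical ClassicalEpsilon.
Import ListNotations.
Open Scope R_scope.

Lemma cont_eps (f : R -> R) x : continuity_pt f x ->
  forall e, 0 < e -> exists d, 0 < d /\ forall y, Rabs (y - x) < d -> Rabs (f y - f x) < e.
Proof.
  intros H e He. destruct (H e He) as [d [Hd Hf]]. exists d; split; [lra|].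
  intros y Hy. destruct (Req_dec y x) as [->|Hne].
  - unfold Rminus; rewrite Rplus_opp_r, Rabs_R0; lra.
  - apply (Hf y). split; [split; [exact I| congruence]|]. exact Hy.
Qed.

Lemma R_conn (S : R -> Prop) :
  (forall x, S x -> exists d, 0 < d /\ forall y, Rabs (y - x) < d -> S y) ->
  (forall x, ~ S x -> exists d, 0 < d /\ forall y, Rabs (y - x) < d -> ~ S y) ->
  forall a b, S a -> S b.
Proof.
  intros H1 H2 a b Ha. apply NNPP; intro Hb.
  set (f := fun x => if excluded_middle_informative (S x) then 1 else -1).
  assert (Hc : continuity f).
  { intros x. intros e He. destruct (classic (S x)) as [Sx|Sx].
    - destruct (H1 x Sx) as [d [Hd Hy]]. exists d; split; [lra|].
      intros y [_ Hyd]. simpl in *. unfold Rdist in *. unfold f.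
      destruct (excluded_middle_informative (S y)); destruct (excluded_middle_informative (S x));
        try tauto; try (rewrite Rminus_diag, Rabs_R0; lra).
      exfalso. apply n. apply Hy. exact Hyd.
    - destruct (H2 x Sx) as [d [Hd Hy]]. exists d; split; [lra|].
      intros y [_ Hyd]. simpl in *. unfold Rdist in *. unfold f.
      destruct (excluded_middle_informative (S y)); destruct (excluded_middle_informative (S x));
        try tauto; try (rewrite Rminus_diag, Rabs_R0; lra).
      exfalso. exact (Hy y Hyd s). }
  assert (fa : f a = 1) by (unfold f; destruct (excluded_middle_informative (S a)); tauto).
  assert (fb : f b = -1) by (unfold f; destruct (excluded_middle_informative (S b)); tauto).
  assert (fz : forall z, f z <> 0) by (intro z; unfold f; destruct (excluded_middle_informative (S z)); lra).
  destruct (Rtotal_order a b) as [Hab|[Hab|Hab]].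
  - destruct (IVT (fun x => - f x) a b) as [z [_ Hz]].
    + apply continuity_opp; exact Hc.
    + exact Hab.
    + lra.
    + lra.
    + apply (fz z); lra.
  - subst; tauto.
  - destruct (IVT f b a) as [z [_ Hz]]; auto; try lra. apply (fz z Hz).
Qed.

Lemma angle c s : c ^ 2 + s ^ 2 = 1 -> exists t, cos t = c /\ sin t = s.
Proof.
  intros H. assert (Hc : -1 <= c <= 1) by nra.
  assert (Hs : sqrt (1 - c²) = Rabs s).
  { replace (1 - c²) with (s²) by (unfold Rsqr; nra). apply sqrt_Rsqr_abs. }
  destruct (Rle_dec 0 s).
  - exists (acos c). rewrite cos_acos, sin_acos by lra. rewrite Hs, Rabs_right; lra.
  - exists (- acos c). rewrite cos_neg, sin_neg, cos_acos, sin_acos by lra.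
    rewrite Hs, Rabs_left; lra.
Qed.
Lemma ser_map_lt n1 s1 t2 n2 v : (s1 < n1)%nat -> (t2 < n2)%nat -> (v < n2)%nat ->
  (ser_map n1 s1 t2 v < n1 + n2 - 1)%nat.
Proof.
  intros. unfold ser_map. destruct (Nat.eqb_spec v t2); [lia|].
  destruct (Nat.ltb_spec v t2); lia.
Qed.

Lemma par_map_lt n1 s1 t1 s2 t2 n2 v : (s1 < n1)%nat -> (t1 < n1)%nat -> (s2 < n2)%nat -> (t2 < n2)%nat -> s2 <> t2 -> (v < n2)%nat ->
  (par_map n1 s1 t1 s2 t2 v < n1 + n2 - 2)%nat.
Proof.
  intros. unfold par_map. destruct (Nat.eqb_spec v s2); [lia|].
  destruct (Nat.eqb_spec v t2); [lia|].
  destruct (Nat.ltb_spec s2 v); destruct (Nat.ltb_spec t2 v); lia.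
Qed.

Lemma ttspg_range G s t : ttspg G s t -> (s < nv G)%nat /\ (t < nv G)%nat /\ s <> t /\
  Forall (fun e => (fst e < nv G)%nat /\ (snd e < nv G)%nat) (edges G).
Proof.
  induction 1 as [| G1 s1 t1 G2 s2 t2 _ [A1 [B1 [C1 D1]]] _ [A2 [B2 [C2 D2]]]
                  | G1 s1 t1 G2 s2 t2 _ [A1 [B1 [C1 D1]]] _ [A2 [B2 [C2 D2]]]]; simpl.
  - repeat split; try lia. repeat constructor; simpl; lia.
  - assert (Hs : ser_map (nv G1) s1 t2 s2 <> s1 /\ (ser_map (nv G1) s1 t2 s2 >= nv G1)%nat).
    { unfold ser_map. destruct (Nat.eqb_spec s2 t2); [lia|]. destruct (Nat.ltb_spec s2 t2); lia. }
    repeat split.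
    + apply ser_map_lt; lia.
    + lia.
    + lia.
    + apply Forall_app; split.
      * eapply Forall_impl; [|exact D1]. simpl; intros e [? ?]; lia.
      * apply Forall_map. eapply Forall_impl; [|exact D2]. simpl; intros e [? ?];
        split; apply ser_map_lt; lia.
  - repeat split; try lia.
    apply Forall_app; split.
    * eapply Forall_impl; [|exact D1]. simpl; intros e [? ?]; lia.
    * apply Forall_map. eapply Forall_impl; [|exact D2]. simpl; intros e [? ?];
        split; apply par_map_lt; lia.
Qed.
Definition padd (a b : R * R) : R * R := (fst a + fst b, snd a + snd b).
Definition psub (a b : R * R) : R * R := (fst a - fst b, snd a - snd b).
Definition rotp (c s : R) (a : R * R) : R * R := (c * fst a - s * snd a, s * fst a + c * snd a).

Lemma pair_eq (a b : R * R) : fst a = fst b -> snd a = snd b -> a = b.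
Proof. destruct a, b; simpl; intros; subst; reflexivity. Qed.

Lemma dist2_eq a b a' b' : fst a - fst b = fst a' - fst b' -> snd a - snd b = snd a' - snd b' ->
  dist2 a b = dist2 a' b'.
Proof. intros H1 H2. unfold dist2. rewrite H1, H2. reflexivity. Qed.

Lemma dist2_rot c s a b : c ^ 2 + s ^ 2 = 1 -> dist2 (rotp c s a) (rotp c s b) = dist2 a b.
Proof.
  intros H. unfold dist2, rotp; simpl. f_equal.
  transitivity ((c ^ 2 + s ^ 2) * ((fst a - fst b) ^ 2 + (snd a - snd b) ^ 2)); [ring|].
  rewrite H; ring.
Qed.

Lemma dist2_le a b : dist2 a b <= Rabs (fst a - fst b) + Rabs (snd a - snd b).
Proof.
  unfold dist2. set (x := fst a - fst b). set (y := snd a - snd b).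
  assert (0 <= Rabs x) by apply Rabs_pos. assert (0 <= Rabs y) by apply Rabs_pos.
  rewrite <- (sqrt_Rsqr (Rabs x + Rabs y)) by lra. apply sqrt_le_1_alt.
  unfold Rsqr. replace (x ^ 2) with (Rabs x * Rabs x) by (rewrite <- Rabs_mult, Rabs_right; [ring| nra]).
  replace (y ^ 2) with (Rabs y * Rabs y) by (rewrite <- Rabs_mult, Rabs_right; [ring| nra]).
  nra.
Qed.

Lemma dist2_ge1 a b : Rabs (fst a - fst b) <= dist2 a b.
Proof.
  unfold dist2. rewrite <- sqrt_Rsqr_abs. apply sqrt_le_1_alt. unfold Rsqr.
  pose proof (pow2_ge_0 (snd a - snd b)). nra.
Qed.

Lemma dist2_ge2 a b : Rabs (snd a - snd b) <= dist2 a b.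
Proof.
  unfold dist2. rewrite <- sqrt_Rsqr_abs. apply sqrt_le_1_alt. unfold Rsqr.
  pose proof (pow2_ge_0 (fst a - fst b)). nra.
Qed.

Lemma dist2_refl a : dist2 a a = 0.
Proof. unfold dist2. replace ((fst a - fst a) ^ 2 + (snd a - snd a) ^ 2) with 0 by ring. apply sqrt_0. Qed.

Lemma Forall2_map_l {A B C} (R0 : B -> C -> Prop) (h : A -> B) l l' :
  Forall2 R0 (map h l) l' <-> Forall2 (fun x y => R0 (h x) y) l l'.
Proof.
  revert l'; induction l; intros l'; simpl; split; intros H; inversion H; subst; constructor; auto;
  apply IHl; auto.
Qed.

Lemma app_inv_len {A} (a b c d : list A) : length a = length b -> a ++ c = b ++ d -> a = b /\ c = d.
Proof.
  revert b; induction a; intros [|x b]; simpl; intros Hl He; try discriminate; auto.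
  injection He as -> He. destruct (IHa b ltac:(lia) He) as [-> ->]. auto.
Qed.

Lemma config_ser_inv G1 s1 G2 t2 l1 l2 p : length l1 = length (edges G1) ->
  config (ser G1 s1 G2 t2) (l1 ++ l2) p ->
  config G1 l1 p /\ config G2 l2 (fun v => p (ser_map (nv G1) s1 t2 v)).
Proof.
  unfold config; simpl. intros Hl H.
  apply Forall2_app_inv_l in H. destruct H as [m1 [m2 [H1 [H2 He]]]].
  pose proof (Forall2_length H1) as L1.
  assert (m1 = l1 /\ m2 = l2) as [-> ->].
  { symmetry in He. apply app_inv_len in He; [tauto|]. congruence. }
  split; auto. exact (proj1 (Forall2_map_l (fun e r => dist2 (p (fst e)) (p (snd e)) = r) _ _ _) H2).
Qed.

Lemma config_ser G1 s1 G2 t2 l1 l2 p :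
  config G1 l1 p -> config G2 l2 (fun v => p (ser_map (nv G1) s1 t2 v)) ->
  config (ser G1 s1 G2 t2) (l1 ++ l2) p.
Proof.
  unfold config; simpl. intros H1 H2. apply Forall2_app; auto. apply (proj2 (Forall2_map_l (fun e r => dist2 (p (fst e)) (p (snd e)) = r) _ _ _)). exact H2.
Qed.

Lemma config_ext G l p q :
  Forall (fun e => (fst e < nv G)%nat /\ (snd e < nv G)%nat) (edges G) ->
  (forall v, (v < nv G)%nat -> p v = q v) -> config G l p -> config G l q.
Proof.
  unfold config. intros HF Hpq H. induction H as [|e r l l' He Hr IH]; constructor;
  inversion HF as [|? ? [Ha Hb] HF']; subst; auto.
  rewrite <- !Hpq by auto. reflexivity.
Qed.

Lemma config_map G l q (g : R * R -> R * R) : (forall a b, dist2 (g a) (g b) = dist2 a b) ->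
  config G l q -> config G l (fun v => g (q v)).
Proof.
  unfold config. intros Hg H. eapply Forall2_impl; [|exact H]. simpl. intros e r <-. apply Hg.
Qed.

Definition gv (n1 t2 v : nat) : nat :=
  if Nat.ltb (v - n1) t2 then (v - n1)%nat else (v - n1 + 1)%nat.
Definition comb (n1 s1 t2 : nat) (q1 q2 : nat -> R * R) (v : nat) : R * R :=
  if Nat.ltb v n1 then q1 v else padd (q2 (gv n1 t2 v)) (psub (q1 s1) (q2 t2)).
Definition rq (t : R) (q : nat -> R * R) (v : nat) := rotp (cos t) (sin t) (q v).

Fixpoint bsum (q : nat -> R * R) (k : nat) : R :=
  match k with O => 0 | S k => bsum q k + (Rabs (fst (q k)) + Rabs (snd (q k))) end.

Lemma bsum_ge q k u : (u < k)%nat -> Rabs (fst (q u)) + Rabs (snd (q u)) <= bsum q k.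
Proof.
  induction k; simpl; intros H; [lia|].
  assert (Hb : forall j, 0 <= bsum q j).
  { induction j; simpl; [lra|]. pose proof (Rabs_pos (fst (q j))); pose proof (Rabs_pos (snd (q j))); lra. }
  destruct (Nat.eq_dec u k) as [->|].
  - pose proof (Hb k); lra.
  - pose proof (IHk ltac:(lia)). pose proof (Rabs_pos (fst (q k))); pose proof (Rabs_pos (snd (q k))); lra.
Qed.

Lemma gv_lt n1 n2 t2 v : (t2 < n2)%nat -> (n1 <= v)%nat -> (v < n1 + n2 - 1)%nat -> (gv n1 t2 v < n2)%nat.
Proof. intros. unfold gv. destruct (Nat.ltb_spec (v - n1) t2); lia. Qed.

Lemma cs_cont t e : 0 < e -> exists d, 0 < d /\ forall u, Rabs (u - t) < d ->
  Rabs (cos u - cos t) < e /\ Rabs (sin u - sin t) < e.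
Proof.
  intros He. destruct (cont_eps cos t (continuity_cos t) e He) as [d1 [Hd1 H1]].
  destruct (cont_eps sin t (continuity_sin t) e He) as [d2 [Hd2 H2]].
  exists (Rmin d1 d2). split; [apply Rmin_pos; auto|]. intros u Hu.
  pose proof (Rmin_l d1 d2); pose proof (Rmin_r d1 d2). split; [apply H1|apply H2]; lra.
Qed.

Lemma cont_rot n1 n2 s1 t2 q1 q2 t e : (t2 < n2)%nat -> 0 < e ->
  exists d, 0 < d /\ forall u, Rabs (u - t) < d ->
    close (n1 + n2 - 1) (comb n1 s1 t2 q1 (rq t q2)) (comb n1 s1 t2 q1 (rq u q2)) e.
Proof.
  intros Ht He. set (K := bsum q2 n2).
  assert (HK : 0 <= K).
  { unfold K. pose proof (bsum_ge q2 n2 t2 Ht). pose proof (Rabs_pos (fst (q2 t2))); pose proof (Rabs_pos (snd (q2 t2))); lra. }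
  set (eta := e / (4 * K + 1)).
  assert (Heta : 0 < eta) by (unfold eta; apply Rdiv_lt_0_compat; lra).
  assert (HetaK : 4 * eta * K < e).
  { unfold eta. apply (Rmult_lt_reg_r (4 * K + 1)); [lra|].
    field_simplify; [|lra]. nra. }
  destruct (cs_cont t eta Heta) as [d [Hd Hcs]]. exists d; split; auto.
  intros u Hu v Hv. destruct (Hcs u Hu) as [HX HY].
  unfold comb. destruct (Nat.ltb_spec v n1).
  - rewrite dist2_refl; lra.
  - pose proof (gv_lt n1 n2 t2 v Ht ltac:(lia) Hv) as Hg.
    pose proof (bsum_ge q2 n2 _ Hg) as B1. pose proof (bsum_ge q2 n2 _ Ht) as B2. fold K in B1, B2.
    unfold rq, padd, psub, rotp. simpl.
    set (a := fst (q2 (gv n1 t2 v))) in *. set (b := snd (q2 (gv n1 t2 v))) in *.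
    set (c := fst (q2 t2)) in *. set (dd := snd (q2 t2)) in *.
    eapply Rle_lt_trans; [apply dist2_le|]. simpl.
    set (X := cos u - cos t) in *. set (Y := sin u - sin t) in *.
    match goal with |- Rabs ?A + Rabs ?B < _ =>
      replace A with (- (X * (a - c) - Y * (b - dd))) by (unfold X, Y; ring);
      replace B with (- (Y * (a - c) + X * (b - dd))) by (unfold X, Y; ring) end.
    rewrite !Rabs_Ropp.
    pose proof (Rabs_triang (X * (a - c)) (- (Y * (b - dd)))).
    pose proof (Rabs_triang (Y * (a - c)) (X * (b - dd))).
    unfold Rminus at 1 in H0. rewrite Rabs_Ropp in H0. rewrite !Rabs_mult in H0, H1.
    pose proof (Rabs_triang a (-c)). pose proof (Rabs_triang b (-dd)). rewrite Rabs_Ropp in H2, H3.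
    pose proof (Rabs_pos (a - c)). pose proof (Rabs_pos (b - dd)).
    pose proof (Rabs_pos X). pose proof (Rabs_pos Y).
    assert (Rabs X * Rabs (a - c) <= eta * Rabs (a - c)) by (apply Rmult_le_compat_r; lra).
    assert (Rabs Y * Rabs (a - c) <= eta * Rabs (a - c)) by (apply Rmult_le_compat_r; lra).
    assert (Rabs X * Rabs (b - dd) <= eta * Rabs (b - dd)) by (apply Rmult_le_compat_r; lra).
    assert (Rabs Y * Rabs (b - dd) <= eta * Rabs (b - dd)) by (apply Rmult_le_compat_r; lra).
    assert (eta * (Rabs (a - c) + Rabs (b - dd)) <= eta * (2 * K)).
    { apply Rmult_le_compat_l; [lra|]. unfold Rminus in *. lra. }
    unfold Rminus in *. nra.
Qed.

Lemma rigid_id : rigid (fun a => a).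
Proof. exists 1, 0, 0, 0. split; [ring|]. intros x y. apply pair_eq; simpl; ring. Qed.

Lemma rigid_dec f : rigid f -> exists c s a b, c ^ 2 + s ^ 2 = 1 /\ forall x, f x = padd (rotp c s x) (a, b).
Proof.
  intros [c [s [a [b [H Hf]]]]]. exists c, s, a, b. split; auto. intros [x y]. rewrite Hf.
  apply pair_eq; unfold padd, rotp; simpl; ring.
Qed.

Lemma sat_pw n C A p q : saturated n C A -> C p -> C q ->
  (forall v, (v < n)%nat -> q v = p v) -> A p -> A q.
Proof.
  intros HS Cp Cq Hpq Ap. apply (HS p q Cp Cq); auto. exists (fun a => a). split; [apply rigid_id|]. auto.
Qed.

Lemma pull_open n n' (C C' A : (nat -> R * R) -> Prop) F : rel_open n C A ->
  (forall p, C' p -> C (F p)) ->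
  (forall p, C' p -> forall e, 0 < e -> exists d, 0 < d /\ forall q, C' q -> close n' p q d -> close n (F p) (F q) e) ->
  rel_open n' C' (fun p => A (F p)).
Proof.
  intros HA HC Hc p Cp Ap. destruct (HA (F p) (HC p Cp) Ap) as [e [He Hq]].
  destruct (Hc p Cp e He) as [d [Hd Hd']]. exists d; split; auto.
Qed.

Lemma pull_sat n n' (C C' A : (nat -> R * R) -> Prop) F : saturated n C A ->
  (forall p, C' p -> C (F p)) ->
  (forall p q, C' p -> C' q -> equiv n' p q -> equiv n (F p) (F q)) ->
  saturated n' C' (fun p => A (F p)).
Proof. intros HA HC He p q Cp Cq E Ap. apply (HA (F p) (F q)); auto. Qed.

Lemma dist2_pos a b : 0 <= dist2 a b.
Proof. unfold dist2. apply sqrt_pos. Qed.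

Lemma cont_comb1 n1 n2 s1 t2 q1 q1' q2 d : (s1 < n1)%nat -> close n1 q1 q1' d ->
  close (n1 + n2 - 1) (comb n1 s1 t2 q1 q2) (comb n1 s1 t2 q1' q2) d.
Proof.
  intros Hs H v Hv. unfold comb. destruct (Nat.ltb_spec v n1); auto.
  rewrite (dist2_eq _ _ (q1 s1) (q1' s1)); [apply H; auto| |]; unfold padd, psub; simpl; ring.
Qed.

Lemma cont_comb2 n1 n2 s1 t2 q1 q2 q2' d : (t2 < n2)%nat -> close n2 q2 q2' d ->
  close (n1 + n2 - 1) (comb n1 s1 t2 q1 q2) (comb n1 s1 t2 q1 q2') (4 * d).
Proof.
  intros Ht H v Hv. pose proof (H t2 Ht) as H1. pose proof (dist2_pos (q2 t2) (q2' t2)).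
  unfold comb. destruct (Nat.ltb_spec v n1).
  - rewrite dist2_refl; lra.
  - pose proof (gv_lt n1 n2 t2 v Ht ltac:(lia) Hv) as Hg. pose proof (H _ Hg) as H2'.
    eapply Rle_lt_trans; [apply dist2_le|]. unfold padd, psub; simpl.
    set (x := q2 (gv n1 t2 v)) in *. set (x' := q2' (gv n1 t2 v)) in *.
    pose proof (dist2_ge1 x x'). pose proof (dist2_ge2 x x').
    pose proof (dist2_ge1 (q2 t2) (q2' t2)). pose proof (dist2_ge2 (q2 t2) (q2' t2)).
    match goal with |- Rabs ?A + Rabs ?B < _ =>
      replace A with ((fst x - fst x') + - (fst (q2 t2) - fst (q2' t2))) by ring;
      replace B with ((snd x - snd x') + - (snd (q2 t2) - snd (q2' t2))) by ring end.
    pose proof (Rabs_triang (fst x - fst x') (- (fst (q2 t2) - fst (q2' t2)))).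
    pose proof (Rabs_triang (snd x - snd x') (- (snd (q2 t2) - snd (q2' t2)))).
    rewrite Rabs_Ropp in H7, H8. lra.
Qed.

Lemma comb_sm n1 s1 t2 q1 q2 v : (s1 < n1)%nat ->
  comb n1 s1 t2 q1 q2 (ser_map n1 s1 t2 v) = padd (q2 v) (psub (q1 s1) (q2 t2)).
Proof.
  intros Hs. unfold comb, ser_map. destruct (Nat.eqb_spec v t2).
  - subst. destruct (Nat.ltb_spec s1 n1); [|lia]. apply pair_eq; unfold padd, psub; simpl; ring.
  - destruct (Nat.ltb_spec v t2).
    + destruct (Nat.ltb_spec (n1 + v) n1); [lia|]. unfold gv.
      replace (n1 + v - n1)%nat with v by lia. destruct (Nat.ltb_spec v t2); [reflexivity|lia].
    + destruct (Nat.ltb_spec (n1 + v - 1) n1); [lia|]. unfold gv.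
      destruct (Nat.ltb_spec (n1 + v - 1 - n1) t2); [lia|].
      replace (n1 + v - 1 - n1 + 1)%nat with v by lia. reflexivity.
Qed.

Lemma comb_self n1 s1 t2 p v : (s1 < n1)%nat ->
  comb n1 s1 t2 p (fun u => p (ser_map n1 s1 t2 u)) v = p v.
Proof.
  intros Hs. unfold comb. destruct (Nat.ltb_spec v n1); auto.
  assert (E : ser_map n1 s1 t2 (gv n1 t2 v) = v).
  { unfold gv, ser_map. destruct (Nat.ltb_spec (v - n1) t2).
    - destruct (Nat.eqb_spec (v - n1) t2); [lia|]. destruct (Nat.ltb_spec (v - n1) t2); lia.
    - destruct (Nat.eqb_spec (v - n1 + 1) t2); [lia|]. destruct (Nat.ltb_spec (v - n1 + 1) t2); lia. }
  rewrite E. unfold ser_map. rewrite Nat.eqb_refl. apply pair_eq; unfold padd, psub; simpl; ring.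
Qed.

Definition rangeG G := Forall (fun e => (fst e < nv G)%nat /\ (snd e < nv G)%nat) (edges G).

Lemma comb_C G1 s1 G2 t2 l1 l2 q1 q2 : (s1 < nv G1)%nat -> rangeG G1 -> rangeG G2 ->
  config G1 l1 q1 -> config G2 l2 q2 ->
  config (ser G1 s1 G2 t2) (l1 ++ l2) (comb (nv G1) s1 t2 q1 q2).
Proof.
  intros Hs R1 R2 C1 C2. apply config_ser.
  - apply (config_ext G1 l1 q1); auto. intros v Hv. unfold comb.
    destruct (Nat.ltb_spec v (nv G1)); [reflexivity|lia].
  - apply (config_ext G2 l2 (fun v => padd (q2 v) (psub (q1 s1) (q2 t2)))); auto.
    + intros v _. symmetry. apply comb_sm; auto.
    + apply (config_map G2 l2 q2 (fun a => padd a (psub (q1 s1) (q2 t2)))); auto.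
      intros a b. apply dist2_eq; unfold padd; simpl; ring.
Qed.

Lemma config_rot G l q c s : c ^ 2 + s ^ 2 = 1 -> config G l q -> config G l (fun v => rotp c s (q v)).
Proof. intros H. apply config_map. intros; apply dist2_rot; auto. Qed.

Lemma cs1 t : cos t ^ 2 + sin t ^ 2 = 1.
Proof. pose proof (sin2_cos2 t). unfold Rsqr in H. lra. Qed.

Lemma Rot G1 s1 G2 t2 l1 l2 A q1 q2 c s :
  (s1 < nv G1)%nat -> (t2 < nv G2)%nat -> rangeG G1 -> rangeG G2 ->
  saturated (nv G1 + nv G2 - 1) (config (ser G1 s1 G2 t2) (l1 ++ l2)) A ->
  rel_open (nv G1 + nv G2 - 1) (config (ser G1 s1 G2 t2) (l1 ++ l2)) A ->
  rel_open (nv G1 + nv G2 - 1) (config (ser G1 s1 G2 t2) (l1 ++ l2)) (fun p => ~ A p) ->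
  config G1 l1 q1 -> config G2 l2 q2 -> c ^ 2 + s ^ 2 = 1 ->
  A (comb (nv G1) s1 t2 q1 q2) -> A (comb (nv G1) s1 t2 q1 (fun v => rotp c s (q2 v))).
Proof.
  intros Hs Ht R1 R2 HS HO HO' C1 C2 Hcs HA.
  set (S := fun t => A (comb (nv G1) s1 t2 q1 (rq t q2))).
  assert (CC : forall t, config (ser G1 s1 G2 t2) (l1 ++ l2) (comb (nv G1) s1 t2 q1 (rq t q2))).
  { intros t. apply comb_C; auto. apply config_rot; auto. apply cs1. }
  destruct (angle c s Hcs) as [t0 [Hc0 Hs0]].
  assert (St : S t0).
  { apply (R_conn S) with 0.
    - intros x Sx. destruct (HO _ (CC x) Sx) as [e [He Hq]].
      destruct (cont_rot (nv G1) (nv G2) s1 t2 q1 q2 x e Ht He) as [d [Hd Hu]].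
      exists d; split; auto. intros y Hy. apply Hq; auto.
    - intros x Sx. destruct (HO' _ (CC x) Sx) as [e [He Hq]].
      destruct (cont_rot (nv G1) (nv G2) s1 t2 q1 q2 x e Ht He) as [d [Hd Hu]].
      exists d; split; auto. intros y Hy. apply Hq; auto.
    - unfold S. apply (sat_pw _ _ _ (comb (nv G1) s1 t2 q1 q2) _ HS); auto.
      + apply comb_C; auto.
      + intros v _. unfold comb, rq. rewrite cos_0, sin_0.
        destruct (Nat.ltb_spec v (nv G1)); auto.
        f_equal; apply pair_eq; unfold rotp; simpl; ring. }
  unfold S, rq in St. rewrite Hc0, Hs0 in St. exact St.
Qed.

Lemma rigid_tr k : rigid (fun a => padd a k).
Proof. exists 1, 0, (fst k), (snd k). split; [ring|]. intros x y. apply pair_eq; unfold padd; simpl; ring. Qed.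

Lemma rot_inv c s a : c ^ 2 + s ^ 2 = 1 -> rotp c (- s) (rotp c s a) = a.
Proof.
  intros H. unfold rotp; apply pair_eq; simpl.
  - transitivity ((c ^ 2 + s ^ 2) * fst a); [ring|]. rewrite H; ring.
  - transitivity ((c ^ 2 + s ^ 2) * snd a); [ring|]. rewrite H; ring.
Qed.

Theorem mainTheorem11 (G1 G2 : graph) (s1 t1 s2 t2 : nat) (l1 l2 : list R) :
  ttspg G1 s1 t1 -> ttspg G2 s2 t2 ->
  length l1 = length (edges G1) -> Forall (Rle 0) l1 ->
  length l2 = length (edges G2) -> Forall (Rle 0) l2 ->
  (exists p, config (ser G1 s1 G2 t2) (l1 ++ l2) p) ->
  (M_connected (nv (ser G1 s1 G2 t2)) (config (ser G1 s1 G2 t2) (l1 ++ l2))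
   <-> M_connected (nv G1) (config G1 l1) /\ M_connected (nv G2) (config G2 l2)).
Proof.
  intros T1 T2 Hl1 _ Hl2 _ [p0 Cp0].
  destruct (ttspg_range _ _ _ T1) as [Hs1 [_ [_ R1]]].
  destruct (ttspg_range _ _ _ T2) as [_ [Ht2 [_ R2]]].
  change (nv (ser G1 s1 G2 t2)) with (nv G1 + nv G2 - 1)%nat.
  set (n1 := nv G1) in *. set (n2 := nv G2) in *.
  set (sm := ser_map n1 s1 t2).
  set (C := config (ser G1 s1 G2 t2) (l1 ++ l2)).
  assert (Cinv : forall p, C p -> config G1 l1 p /\ config G2 l2 (fun v => p (sm v))).
  { intros p Cp. apply config_ser_inv; auto. }
  assert (CC : forall q1 q2, config G1 l1 q1 -> config G2 l2 q2 -> C (comb n1 s1 t2 q1 q2)).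
  { intros. apply comb_C; auto. }
  destruct (Cinv p0 Cp0) as [C10 C20].
  split.
  - intros HM. split.
    + intros A HS HO HO'.
      assert (Hcl : forall p, C p -> forall e, 0 < e -> exists d, 0 < d /\ forall q, C q ->
                 close (n1 + n2 - 1) p q d -> close n1 p q e).
      { intros p _ e He. exists e; split; auto. intros q _ Hc v Hv. apply Hc. lia. }
      assert (HC : forall p, C p -> config G1 l1 p) by (intros p Cp; apply Cinv; auto).
      destruct (HM (fun p => A p)) as [H|H].
      * apply (pull_sat n1 _ (config G1 l1) C A (fun p => p)); auto.
        intros p q _ _ [f [Hf Hq]]. exists f; split; auto. intros v Hv; apply Hq; lia.
      * apply (pull_open n1 _ (config G1 l1) C A (fun p => p)); auto.
      * apply (pull_open n1 _ (config G1 l1) C (fun p => ~ A p) (fun p => p)); auto.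
      * left. intros q Cq. pose proof (CC q _ Cq C20) as Cc.
        apply (sat_pw _ _ _ _ _ HS (HC _ Cc) Cq); [|apply H; auto].
        intros v Hv. unfold comb. destruct (Nat.ltb_spec v n1); [reflexivity|lia].
      * right. intros q Cq Aq. pose proof (CC q _ Cq C20) as Cc.
        apply (H _ Cc). apply (sat_pw _ _ _ _ _ HS Cq (HC _ Cc)); auto.
        intros v Hv. unfold comb. destruct (Nat.ltb_spec v n1); [reflexivity|lia].
    + intros A HS HO HO'.
      set (F := fun (p : nat -> R * R) v => p (sm v)).
      assert (Hsm : forall v, (v < n2)%nat -> (sm v < n1 + n2 - 1)%nat).
      { intros v Hv. apply ser_map_lt; auto. }
      assert (HC : forall p, C p -> config G2 l2 (F p)) by (intros p Cp; apply Cinv; auto).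
      assert (Hcl : forall p, C p -> forall e, 0 < e -> exists d, 0 < d /\ forall q, C q ->
                 close (n1 + n2 - 1) p q d -> close n2 (F p) (F q) e).
      { intros p _ e He. exists e; split; auto. intros q _ Hc v Hv. apply Hc. auto. }
      assert (Heq : forall q2, config G2 l2 q2 ->
                 equiv n2 (F (comb n1 s1 t2 p0 q2)) q2).
      { intros q2 _. exists (fun a => padd a (psub (q2 t2) (p0 s1))). split; [apply rigid_tr|].
        intros v Hv. unfold F, sm. rewrite comb_sm by auto.
        apply pair_eq; unfold padd, psub; simpl; ring. }
      destruct (HM (fun p => A (F p))) as [H|H].
      * apply (pull_sat n2 _ (config G2 l2) C A F); auto.
        intros p q _ _ [f [Hf Hq]]. exists f; split; auto. intros v Hv; apply Hq; apply Hsm; auto.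
      * apply (pull_open n2 _ (config G2 l2) C A F); auto.
      * apply (pull_open n2 _ (config G2 l2) C (fun p => ~ A p) F); auto.
      * left. intros q Cq. pose proof (CC _ q C10 Cq) as Cc.
        apply (HS _ _ (HC _ Cc) Cq (Heq q Cq)). apply H; auto.
      * right. intros q Cq Aq. pose proof (CC _ q C10 Cq) as Cc.
        apply (H _ Cc). destruct (Heq q Cq) as [f [Hf Hq]].
        destruct (rigid_dec f Hf) as [c [s [a [b [Hcs Hfe]]]]].
        apply (HS q); auto.
        exists (fun x => rotp c (-s) (padd x (-a, -b))). split.
        { exists c, (-s), (-(c * a + s * b)), (s * a - c * b). split; [nra|].
          intros x y. apply pair_eq; unfold rotp, padd; simpl; ring. }
        intros v Hv. rewrite (Hq v Hv), Hfe.
        rewrite <- (rot_inv c s (F (comb n1 s1 t2 p0 q) v)) at 1 by auto.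
        f_equal. apply pair_eq; unfold padd; simpl; ring.
  - intros [HM1 HM2] A HS HO HO'.
    destruct (classic (exists p, C p /\ A p)) as [[pa [Cpa Apa]]|Hno];
      [left | right; intros p Cp Ap; apply Hno; eauto].
    intros p Cp.
    destruct (Cinv pa Cpa) as [C1a C2a]. destruct (Cinv p Cp) as [C1p C2p].
    set (q2a := fun v => pa (sm v)) in *. set (q2 := fun v => p (sm v)) in *.
    assert (S1 : A (comb n1 s1 t2 pa q2a)).
    { apply (sat_pw _ _ _ pa _ HS); auto. intros v _. apply comb_self; auto. }
    assert (S2 : A (comb n1 s1 t2 p q2a)).
    { destruct (HM1 (fun q1 => A (comb n1 s1 t2 q1 q2a))) as [H|H].
      - intros q1 q1' Cq1 Cq1' [f [Hf Heq]] HB.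
        destruct (rigid_dec f Hf) as [c [s [a [b [Hcs Hfe]]]]].
        assert (H2 : A (comb n1 s1 t2 q1' (fun v => rotp c s (q2a v)))).
        { apply (HS _ _ (CC _ _ Cq1 C2a)
                        (CC _ _ Cq1' (config_rot _ _ _ _ _ Hcs C2a))); auto.
          exists f; split; auto. intros v Hv. unfold comb.
          destruct (Nat.ltb_spec v n1); [apply Heq; auto|].
          rewrite (Heq s1 Hs1), !Hfe. apply pair_eq; unfold padd, psub, rotp; simpl; ring. }
        assert (Hcs' : c ^ 2 + (- s) ^ 2 = 1) by nra.
        pose proof (Rot G1 s1 G2 t2 l1 l2 A q1' _ c (-s) Hs1 Ht2 R1 R2 HS HO HO' Cq1'
                      (config_rot _ _ _ _ _ Hcs C2a) Hcs' H2) as H3.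
        apply (sat_pw _ _ _ _ _ HS (CC _ _ Cq1' (config_rot _ _ _ _ _ Hcs' (config_rot _ _ _ _ _ Hcs C2a))));
          auto.
        intros v _. unfold comb. cbv beta. rewrite !rot_inv by auto. reflexivity.
      - apply (pull_open (n1 + n2 - 1) n1 C (config G1 l1) A (fun q1 => comb n1 s1 t2 q1 q2a)); auto.
        intros q1 _ e He. exists e; split; auto. intros q _ Hc. apply cont_comb1; auto.
      - apply (pull_open (n1 + n2 - 1) n1 C (config G1 l1) (fun p => ~ A p) (fun q1 => comb n1 s1 t2 q1 q2a)); auto.
        intros q1 _ e He. exists e; split; auto. intros q _ Hc. apply cont_comb1; auto.
      - apply H; auto.
      - exfalso. apply (H pa); auto. }
    assert (S3 : A (comb n1 s1 t2 p q2)).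
    { destruct (HM2 (fun q => A (comb n1 s1 t2 p q))) as [H|H].
      - intros r r' Cr Cr' [f [Hf Heq]] HB.
        destruct (rigid_dec f Hf) as [c [s [a [b [Hcs Hfe]]]]].
        pose proof (Rot G1 s1 G2 t2 l1 l2 A p r c s Hs1 Ht2 R1 R2 HS HO HO' C1p Cr Hcs HB) as H1.
        apply (sat_pw _ _ _ _ _ HS (CC _ _ C1p (config_rot _ _ _ _ _ Hcs Cr)) (CC _ _ C1p Cr')); auto.
        intros v Hv. unfold comb. destruct (Nat.ltb_spec v n1); [reflexivity|].
        rewrite (Heq t2 Ht2), (Heq _ (gv_lt n1 n2 t2 v Ht2 ltac:(lia) Hv)), !Hfe.
        apply pair_eq; unfold padd, psub, rotp; simpl; ring.
      - apply (pull_open (n1 + n2 - 1) n2 C (config G2 l2) A (fun q => comb n1 s1 t2 p q)); auto.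
        intros r _ e He. exists (e / 4); split; [lra|]. intros q _ Hc.
        replace e with (4 * (e / 4)) by field. apply cont_comb2; auto.
      - apply (pull_open (n1 + n2 - 1) n2 C (config G2 l2) (fun p => ~ A p) (fun q => comb n1 s1 t2 p q)); auto.
        intros r _ e He. exists (e / 4); split; [lra|]. intros q _ Hc.
        replace e with (4 * (e / 4)) by field. apply cont_comb2; auto.
      - apply H; auto.
      - exfalso. apply (H q2a); auto. }
    apply (sat_pw _ _ _ _ _ HS (CC _ _ C1p C2p) Cp); auto.
    intros v _. symmetry. apply comb_self; auto.
Qed.
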